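(* Let $G$ be a COM and let $G'$ be an isometric subgraph of $G$ such that every antipodal subgraph of $G'$ is an antipodal subgraph of $G$. Then $G'$ is a COM.
   Context: Hypercube $Q_n$: vertex set $\{+,-\}^n$, adjacency = differing in one coordinate. A partial cube is an isometric subgraph of a hypercube. A subgraph $H$ of a graph $G$ is convex if it contains every shortest path of $G$ between vertices of $H$, and gated if for every vertex $x$ of $G$ there is $x'\in H$ such that for every $u\in H$ some shortest $x$–$u$ path passes through $x'$. A partial cube $G\subseteq Q_n$ ($n$ minimal) is antipodal if with every vertex it contains the vertex with all coordinates flipped; an antipodal subgraph of $G$ is a convex subgraph which is itself an antipodal partial cube. A COM (complex of oriented matroids, identified with its tope graph) is a partial cube all of whose antipodal subgraphs are gated. *)

(* Defs.v *)
(* Graphs are induced subgraphs of the hypercube Q_n,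
   represented by their vertex sets S : {set cube n}. *)
From mathcomp Require Import all_boot.
Set Implicit Arguments. Unset Strict Implicit. Unset Printing Implicit Defensive.

(* Vertices of Q_n: sign vectors {+,-}^n, encoded as 'I_n -> bool. *)
Definition cube (n : nat) := {ffun 'I_n -> bool}.

Section Cube.
Variable n : nat.

Definition hamming (x y : cube n) : nat := #|[set i | x i != y i]|.
Definition adj : rel (cube n) := fun x y => hamming x y == 1.

(* [gpath S x p y]: x :: p is a walk in the induced subgraph on S from x to y;
   its length is size p. *)
Definition gpath (S : {set cube n}) (x : cube n) (p : seq (cube n)) (y : cube n) : Prop :=
  [&& x \in S, all (fun z => z \in S) p, path adj x p & last x p == y].

Definition shortest_path (S : {set cube n}) x p y : Prop :=
  gpath S x p y /\ forall q, gpath S x q y -> size p <= size q.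

Definition isometric_in (H G : {set cube n}) : Prop :=
  H \subset G /\
  forall x y, x \in H -> y \in H ->
    exists p, gpath H x p y /\ forall q, gpath G x q y -> size p <= size q.

Definition partial_cube (G : {set cube n}) : Prop := isometric_in G [set: cube n].

Definition convex_in (H G : {set cube n}) : Prop :=
  H \subset G /\
  forall x y p, x \in H -> y \in H -> shortest_path G x p y ->
    all (fun z => z \in H) p.

Definition gated_in (H G : {set cube n}) : Prop :=
  forall x, x \in G -> exists2 x', x' \in H &
    forall u, u \in H -> exists p, shortest_path G x p u /\ x' \in x :: p.

(* Coordinates that are non-constant on H; restricting to them gives the
   embedding of H in a hypercube of minimal dimension. *)
Definition varying (H : {set cube n}) : {set 'I_n} :=
  [set i | [exists x in H, exists y in H, x i != y i]].

(* antipode of x w.r.t. the minimal embedding of H: flip all coordinates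
   of the minimal embedding *)
Definition antipode (H : {set cube n}) (x : cube n) : cube n :=
  [ffun i => if i \in varying H then ~~ x i else x i].

Definition antipodal (H : {set cube n}) : Prop :=
  H != set0 /\ partial_cube H /\ forall x, x \in H -> antipode H x \in H.

Definition antipodal_sub (H G : {set cube n}) : Prop :=
  convex_in H G /\ antipodal H.

(* COM (tope graph): partial cube all of whose antipodal subgraphs are gated *)
Definition COM (G : {set cube n}) : Prop :=
  partial_cube G /\ forall H, antipodal_sub H G -> gated_in H G.

End Cube.

(* Main.v *)
Require Import Defs.
From mathcomp Require Import all_boot.

Section Aux.
Variable n : nat.

Lemma gpath_sub (S T : {set cube n}) x p y :
  S \subset T -> gpath S x p y -> gpath T x p y.
Proof.
move=> /subsetP sST /and4P[xS pS pp ly]; apply/and4P; split=> //.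
  exact: sST.
by apply/allP=> z /(allP pS) /sST.
Qed.

Lemma gpath_cat (S : {set cube n}) x p y q z :
  gpath S x p y -> gpath S y q z -> gpath S x (p ++ q) z.
Proof.
move=> /and4P[xS pS pp /eqP ly] /and4P[yS qS qp lz]; apply/and4P; split=> //.
- by rewrite all_cat pS.
- by rewrite cat_path pp ly.
- by rewrite last_cat ly.
Qed.

Lemma gpath_split (S : {set cube n}) x p y z :
  gpath S x p y -> z \in x :: p ->
  exists p1 p2, [/\ p = p1 ++ p2, gpath S x p1 z & gpath S z p2 y].
Proof.
move=> + zin; case/splitPl: zin => p1 p2 lz /and4P[xS pS pp ly].
exists p1, p2; split=> //.
- move: pS pp; rewrite all_cat cat_path => /andP[p1S _] /andP[pp1 _].
  by apply/and4P; split=> //; rewrite lz.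
- move: pS pp ly; rewrite all_cat cat_path last_cat => /andP[p1S p2S] /andP[_ pp2] ly.
  apply/and4P; split=> //; rewrite -?lz //.
  have : last x p1 \in x :: p1 by exact: mem_last.
  by rewrite inE => /orP[/eqP -> //| /(allP p1S)].
Qed.

End Aux.
Arguments gpath_sub {n S T x p y}.
Arguments gpath_cat {n S x p y q z}.
Arguments gpath_split {n S x p y z}.

Theorem mainTheorem5 (n : nat) (G G' : {set cube n}) :
  COM G ->
  isometric_in G' G ->
  (forall H : {set cube n}, antipodal_sub H G' -> antipodal_sub H G) ->
  COM G'.
Proof.
move=> [[_ pcG] gatG] [sG'G isoG'] hAnt; split.
  split; first exact: subsetT.
  move=> x y xG' yG'.
  have [p [pG' pmin]] := isoG' x y xG' yG'.
  have [p2 [p2G p2min]] := pcG x y (subsetP sG'G x xG') (subsetP sG'G y yG').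
  exists p; split=> // q qT.
  apply: leq_trans (pmin _ p2G) (p2min _ qT).
move=> H antH.
have [[sHG' _] _] := antH.
move=> x xG'.
have [x' x'H gx] := gatG H (hAnt H antH) x (subsetP sG'G x xG').
exists x' => // u uH.
have [p [[pG pmin] x'p]] := gx u uH.
have [p1 [p2 [ep gp1 gp2]]] := gpath_split pG x'p.
have x'G' := subsetP sHG' x' x'H.
have [q1 [q1G' q1min]] := isoG' x x' xG' x'G'.
have [q2 [q2G' q2min]] := isoG' x' u x'G' (subsetP sHG' u uH).
exists (q1 ++ q2); split; last first.
  have : last x q1 \in x :: (q1 ++ q2).
    by rewrite -cat_cons mem_cat mem_last.
  by case/and4P: q1G' => _ _ _ /eqP ->.
split; first exact: gpath_cat q1G' q2G'.
move=> q qG'.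
apply: leq_trans (pmin _ (gpath_sub sG'G qG')).
rewrite ep !size_cat leq_add //; [exact: q1min | exact: q2min].
Qed.
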